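(* Let $d\geq 2$ be a fixed integer, let $n\geq d\cdot 64^{d \log d}$ be an integer and let $k$ be a positive integer with $k \leq n^{(d-1)/d}\cdot (5d)^{1/d-2}$. Define $h = \left\lceil \left(\tfrac{9d}{2}\cdot (k+2)\right)^{1/(d-1)} -1\right\rceil$ and $m=\left\lfloor n/ \left(d\cdot (h+1)^d+ d\cdot (h+1)^{d-1}\right)\right\rfloor$, and for $i\in\{1,\dots,d\}$ let $$P_i=\bigcup^{h}_{j_1=0}\cdots \bigcup^{h}_{j_d=0}\{ (j_1 m,\dots,j_{i-1} m,x_i,j_{i+1} m,\dots,j_d m) \mid x_i\in \{0, \dots, h m\}\}\subset\mathbb{R}^d,$$ and $P_{d,n,k}=\bigcup_{i=1}^d P_i$. Then $m\geq 1$ (so $P_{d,n,k}$ is well-defined, resembling the $(h+1)^d$-grid with each grid edge subdivided into $m$ unit segments) and $|P_{d,n,k}|\leq n$. *)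

(* Defs.v *)
From Stdlib Require Import Reals.
From mathcomp Require Import all_boot.

(* h = ceil( (9d/2 (k+2))^(1/(d-1)) - 1 ),  ceil y = - floor (- y),
   floor = Int_part (Int_part r = up r - 1).  The value is >= 1 when d >= 2. *)
Definition hval (d k : nat) : nat :=
  Z.to_nat (Z.opp (Int_part (Ropp (Rminus
     (Rpower (Rmult (Rdiv (Rmult 9 (INR d)) 2) (Rplus (INR k) 2))
             (Rdiv 1 (Rminus (INR d) 1))) 1)))).

Definition mval (d n h : nat) : nat :=
  Z.to_nat (Int_part (Rdiv (INR n)
     (Rplus (Rmult (INR d) (pow (INR (h + 1)) d))
            (Rmult (INR d) (pow (INR (h + 1)) (d - 1)))))).

(* Points of the integer box {0,...,h m}^d, a subset of R^d (encoded injectively). *)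
Definition point (d h m : nat) := {ffun 'I_d -> 'I_(h * m).+1}.

Definition Pi (d h m : nat) (i : 'I_d) : {set point d h m} :=
  \bigcup_(j : {ffun 'I_d -> 'I_h.+1})
    [set x : point d h m | [forall l : 'I_d, (l != i) ==> (val (x l) == val (j l) * m)]].

Definition Pset (d h m : nat) : {set point d h m} := \bigcup_(i < d) Pi d h m i.

(* Main.v *)
From Stdlib Require Import Reals Lra Lia Psatz ZArith.
From mathcomp Require Import all_boot zify.
Require Import Defs.
Open Scope R_scope.

Lemma Rpower_pos x y : 0 < Rpower x y.
Proof. unfold Rpower; apply exp_pos. Qed.

Lemma hval_lt d k : INR (hval d k) < Rpower (9 * INR d / 2 * (INR k + 2)) (1 / (INR d - 1)).
Proof.
  unfold hval. set (B := Rpower _ _).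
  assert (hB : 0 < B) by apply Rpower_pos.
  destruct (base_Int_part (- (B - 1))) as [h1 h2].
  set (z := Int_part (- (B - 1))) in *.
  assert (hz : - IZR z < B) by lra.
  rewrite <- opp_IZR in hz.
  destruct (Z.opp z) as [|p|p] eqn:E; simpl.
  - lra.
  - rewrite INR_IZR_INZ positive_nat_Z. exact hz.
  - lra.
Qed.

Lemma ip_ge1 r : 1 <= r -> (1 <= Z.to_nat (Int_part r))%N.
Proof.
  intros hr. destruct (base_Int_part r) as [h1 h2].
  assert (hz : 0 < IZR (Int_part r)) by lra.
  apply lt_IZR in hz. apply/leP. lia.
Qed.

Lemma ip_le r : 0 <= r -> INR (Z.to_nat (Int_part r)) <= r.
Proof.
  intros hr. destruct (base_Int_part r) as [h1 h2].
  destruct (Z_le_gt_dec 0 (Int_part r)) as [hp|hn].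
  - rewrite INR_IZR_INZ Z2Nat.id; [lra|exact hp].
  - replace (Z.to_nat (Int_part r)) with 0%nat by lia. simpl; lra.
Qed.

Lemma INR_expn a b : INR (a ^ b)%N = INR a ^ b.
Proof.
  induction b as [|b IH]. by rewrite expn0.
  rewrite expnS. change (INR (Nat.mul a (a ^ b)%N) = INR a * INR a ^ b).
  rewrite mult_INR IH. reflexivity.
Qed.

Lemma pow_lt_S x y n : 0 <= x < y -> x ^ (S n) < y ^ (S n).
Proof.
  intros [hx hxy]. induction n as [|n IH]. simpl; lra.
  change (x ^ S (S n)) with (x * x ^ S n). change (y ^ S (S n)) with (y * y ^ S n).
  assert (0 <= x ^ S n) by (apply pow_le; lra). nra.
Qed.

Lemma bern x n : 0 <= x -> INR n * x <= 1/2 -> (1 + x) ^ n <= 1 + 2 * INR n * x.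
Proof.
  intros hx. induction n as [|n IH]; intros h. simpl; lra.
  rewrite S_INR in h. rewrite S_INR. simpl.
  assert (0 <= INR n) by apply pos_INR.
  assert (IH' : (1 + x) ^ n <= 1 + 2 * INR n * x) by (apply IH; nra).
  assert (0 <= (1+x)^n) by (apply pow_le; lra). nra.
Qed.

Lemma F3 e : let D := INR e.+2 in
  Rpower 64 (D * (ln D / ln 2)) = (D ^ 6) ^ e.+2.
Proof.
  intros D. assert (hD : 2 <= D) by (unfold D; rewrite !S_INR; pose proof (pos_INR e); lra).
  assert (hl2 : 0 < ln 2) by (rewrite <- ln_1; apply ln_increasing; lra).
  rewrite <- pow_mult. rewrite <- (Rpower_pow _ D); [|lra]. unfold Rpower.
  replace 64 with (2 ^ 6) by ring. rewrite (ln_pow 2); [|lra].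
  f_equal. rewrite mult_INR. replace (INR 6) with 6 by (simpl; ring). fold D. field. lra.
Qed.

Lemma F2 e n k : let D := INR e.+2 in (0 < n)%N ->
  INR k <= Rpower (INR n) ((D-1)/D) * Rpower (5*D) (1/D - 2) ->
  (5 * D) ^ (e.+1 + e.+2)%coq_nat * INR k ^ e.+2 <= INR n ^ e.+1.
Proof.
  intros D hn hk. assert (hD : 2 <= D) by (unfold D; rewrite !S_INR; pose proof (pos_INR e); lra).
  assert (hN : 0 < INR n) by (apply lt_0_INR; apply (elimT ltP hn)).
  assert (hK := pos_INR k).
  assert (h1 : INR k ^ e.+2 <= (Rpower (INR n) ((D-1)/D) * Rpower (5*D) (1/D - 2)) ^ e.+2).
  { apply pow_incr; lra. }
  rewrite Rpow_mult_distr in h1.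
  rewrite <- (Rpower_pow _ (Rpower (INR n) _) (Rpower_pos _ _)) in h1.
  rewrite <- (Rpower_pow _ (Rpower (5*D) _) (Rpower_pos _ _)) in h1.
  rewrite !Rpower_mult in h1.
  fold D in h1.
  replace ((D - 1) / D * D) with (INR e.+1) in h1
    by (unfold D; rewrite !S_INR; field; pose proof (pos_INR e); lra).
  replace ((1 / D - 2) * D) with (- INR (e.+1 + e.+2)%coq_nat) in h1
    by (rewrite plus_INR; unfold D; rewrite !S_INR; field; pose proof (pos_INR e); lra).
  rewrite Rpower_Ropp in h1. rewrite !Rpower_pow in h1; try lra.
  assert (hp : 0 < (5*D) ^ (e.+1 + e.+2)%coq_nat) by (apply pow_lt; lra).
  apply (Rmult_le_compat_l ((5*D) ^ (e.+1 + e.+2)%coq_nat)) in h1; [|lra].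
  replace ((5 * D) ^ (e.+1 + e.+2)%coq_nat * (INR n ^ e.+1 * / (5 * D) ^ (e.+1 + e.+2)%coq_nat))
    with (INR n ^ e.+1) in h1 by (field; lra). exact h1.
Qed.

Lemma key e n k h : let D := INR e.+2 in
  INR h < Rpower (9 * D / 2 * (INR k + 2)) (1 / (D - 1)) ->
  D * Rpower 64 (D * (ln D / ln 2)) <= INR n ->
  (0 < k)%N ->
  (5 * D) ^ (e.+1 + e.+2)%coq_nat * INR k ^ e.+2 <= INR n ^ e.+1 ->
  D * (INR h + 1) ^ e.+1 * (INR h + 2) <= INR n.
Proof.
  intros D hB hn hk0 hF2.
  assert (hD : 2 <= D) by (unfold D; rewrite !S_INR; pose proof (pos_INR e); lra).
  assert (hD1 : D - 1 = INR e.+1) by (unfold D; rewrite (S_INR e.+1); ring).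
  rewrite F3 in hn. fold D in hn.
  set H := INR h in hB |- *. set K := INR k in hB hF2 |- *. set N := INR n in hn hF2 |- *.
  assert (hH : 0 <= H) by apply pos_INR.
  assert (hK : 1 <= K) by (unfold K; change 1 with (INR 1); apply le_INR; apply/leP; exact hk0).
  assert (hF1 : H ^ e.+1 < 9 * D / 2 * (K + 2)).
  { assert (hA : 0 < 9 * D / 2 * (K + 2)) by nra.
    set A := 9 * D / 2 * (K + 2) in hB hA |- *.
    assert (E : Rpower A (1 / (D - 1)) ^ e.+1 = A).
    { rewrite <- (Rpower_pow _ _ (Rpower_pos _ _)). rewrite Rpower_mult.
      rewrite <- hD1. replace (1 / (D - 1) * (D - 1)) with 1 by (field; lra).
      apply Rpower_1; exact hA. }
    rewrite <- E. apply pow_lt_S. lra. }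
  assert (hH1 : 0 <= H + 1) by lra.
  assert (hH2 : 0 <= H + 2) by lra.
  assert (hD6 : 0 <= D ^ 6) by (apply pow_le; lra).
  assert (hmono : D * (H + 1) ^ e.+1 * (H + 2) <= D * (H + 2) ^ e.+2).
  { change ((H + 2) ^ e.+2) with ((H + 2) * (H + 2) ^ e.+1).
    assert ((H + 1) ^ e.+1 <= (H + 2) ^ e.+1) by (apply pow_incr; lra).
    rewrite Rmult_assoc. apply Rmult_le_compat_l; [lra|]. rewrite Rmult_comm.
    apply Rmult_le_compat_l; lra. }
  eapply Rle_trans; [exact hmono|].
  destruct (Rle_dec (H + 2) (D ^ 6)) as [hc|hc].
  - eapply Rle_trans; [|exact hn].
    apply Rmult_le_compat_l; [lra|]. apply pow_incr. lra.
  - apply Rnot_le_lt in hc.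
    assert (hD5 : 2 ^ 5 <= D ^ 5) by (apply pow_incr; lra).
    assert (hD6' : D ^ 6 = D * D ^ 5) by ring.
    assert (h32 : 32 <= D ^ 5) by (simpl in hD5; lra).
    assert (h32' : 32 * D <= D ^ 6) by (rewrite hD6'; nra).
    assert (hH31 : 31 * D <= H). { clearbody D H K N. lra. }
    assert (hHp : H <= H ^ e.+1).
    { rewrite <- (pow_1 H) at 1. apply Rle_pow; [lra|]. lia. }
    assert (hK5 : 4.8 <= K).
    { assert (9 * D / 2 * (K + 2) > 31 * D) by lra. nra. }
    set u := 2 / H.
    assert (hu : H * u = 2) by (unfold u; field; lra).
    assert (hu0 : 0 <= u) by (unfold u; apply Rlt_le; apply Rdiv_lt_0_compat; lra).
    assert (hDu : D * u <= 2 / 31) by nra.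
    assert (hbern : (1 + u) ^ e.+1 <= 1 + 2 * INR e.+1 * u).
    { apply bern; [lra|]. rewrite <- hD1. nra. }
    assert (hP : (H + 2) ^ e.+1 <= 7.5 * D * K).
    { replace (H + 2) with (H * (1 + u)) by (rewrite Rmult_plus_distr_l; lra).
      rewrite Rpow_mult_distr.
      assert (0 <= H ^ e.+1) by (apply pow_le; lra).
      assert (0 <= (1 + u) ^ e.+1) by (apply pow_le; lra).
      rewrite <- hD1 in hbern.
      assert ((1 + u) ^ e.+1 <= 1.13) by nra.
      nra. }
    destruct (Rle_dec (D * (H + 2) ^ e.+2) N) as [ok|ko]; [exact ok|].
    apply Rnot_le_lt in ko. exfalso.
    assert (hN0 : 0 <= N) by apply pos_INR.
    assert (hlt := pow_lt_S N (D * (H + 2) ^ e.+2) e (conj hN0 ko)).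
    rewrite Rpow_mult_distr in hlt.
    rewrite <- pow_mult in hlt. rewrite Nat.mul_comm in hlt. rewrite pow_mult in hlt.
    assert (hP0 : 0 <= (H + 2) ^ e.+1) by (apply pow_le; lra).
    assert (hPP : ((H + 2) ^ e.+1) ^ e.+2 <= (7.5 * D * K) ^ e.+2) by (apply pow_incr; lra).
    rewrite (Rpow_mult_distr (7.5 * D) K) (Rpow_mult_distr 7.5 D) in hPP.
    rewrite !Rpow_mult_distr in hF2.
    rewrite !pow_add in hF2.
    assert (h75 : 7.5 ^ e.+2 <= 5 ^ e.+1 * 5 ^ e.+2).
    { change (7.5 ^ e.+2) with (7.5 * 7.5 ^ e.+1). change (5 ^ e.+2) with (5 * 5 ^ e.+1).
      replace (5 ^ e.+1 * (5 * 5 ^ e.+1)) with (5 * (5 * 5) ^ e.+1)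
        by (rewrite Rpow_mult_distr; ring).
      replace (5 * 5) with (7.5 * (10 / 3)) by lra. rewrite Rpow_mult_distr.
      assert (10 / 3 <= (10 / 3) ^ e.+1).
      { rewrite <- (pow_1 (10/3)) at 1. apply Rle_pow; [lra|]. lia. }
      assert (0 <= 7.5 ^ e.+1) by (apply pow_le; lra). nra. }
    assert (p1 : 0 <= D ^ e.+1) by (apply pow_le; lra).
    assert (p2 : 0 <= D ^ e.+2) by (apply pow_le; lra).
    assert (p3 : 0 <= K ^ e.+2) by (apply pow_le; lra).
    assert (p4 : 0 <= 7.5 ^ e.+2) by (apply pow_le; lra).
    clearbody D H K N.
    set (X := D ^ e.+1) in *. set (Y := D ^ e.+2) in *. set (Z := K ^ e.+2) in *.
    set (P := ((H + 2) ^ e.+1) ^ e.+2) in *.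
    set (F := 5 ^ e.+1 * 5 ^ e.+2) in *.
    clearbody X Y Z P F.
    assert (p5 : 0 <= X * Y * Z) by (repeat apply Rmult_le_pos; lra).
    assert (q1 : X * P <= X * (7.5 ^ e.+2 * Y * Z)) by (apply Rmult_le_compat_l; lra).
    assert (q2 : 7.5 ^ e.+2 * (X * Y * Z) <= F * (X * Y * Z)) by (apply Rmult_le_compat_r; lra).
    assert (q3 : F * (X * Y) * Z = F * (X * Y * Z)) by ring.
    assert (q4 : X * (7.5 ^ e.+2 * Y * Z) = 7.5 ^ e.+2 * (X * Y * Z)) by ring.
    lra.
Qed.

Close Scope R_scope.

Lemma card_bigcup_le (T : finType) (I : Type) (r : seq I) (P : pred I) (F : I -> {set T}) :
  #|\bigcup_(i <- r | P i) F i| <= \sum_(i <- r | P i) #|F i|.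
Proof.
elim/big_rec2: _ => [|i B n _ IH]; first by rewrite cards0.
apply: leq_trans (leq_card_setU _ _) _; by rewrite leq_add2l.
Qed.

Lemma card_Pi d h m (i : 'I_d) : #|Pi d h m i| <= (h.+1) ^ (d.-1) * (h * m).+1.
Proof.
pose J := pffun_on (ord0 : 'I_h.+1) (predC1 i) predT.
pose f := fun p : {ffun 'I_d -> 'I_h.+1} * 'I_(h * m).+1 =>
  [ffun l => if l == i then p.2 else inord (p.1 l * m)] : point d h m.
have -> : (h.+1) ^ (d.-1) * (h * m).+1 = #|setX [set j in J] [set: 'I_(h * m).+1]|.
  by rewrite cardsX cardsE card_pffun_on cardsT !card_ord cardC1 card_ord.
apply: leq_trans (leq_imset_card f _).
apply: subset_leq_card; apply/subsetP => x /bigcupP [j _].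
rewrite inE => /forallP Hx.
apply/imsetP; exists ([ffun l => if l == i then ord0 else j l], x i).
  rewrite in_setX in_setT andbT inE.
  apply/pffun_onP; split; last by move=> y _.
  by apply/subsetP => l; rewrite !inE ffunE; case: (l == i) => //; rewrite eqxx.
apply/ffunP => l; rewrite ffunE /=.
case: eqP => [->|/eqP ne] //.
apply: val_inj; rewrite /= ffunE (negbTE ne) inordK.
  by move: (Hx l); rewrite ne /= => /eqP.
by rewrite ltnS leq_mul2r -ltnS ltn_ord orbT.
Qed.

Lemma card_Pset d h m : #|Pset d h m| <= d * ((h.+1) ^ (d.-1) * (h * m).+1).
Proof.
rewrite /Pset; apply: leq_trans; first exact: card_bigcup_le.
apply: (@leq_trans (\sum_(i < d) (h.+1 ^ d.-1 * (h * m).+1))).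
  by apply: leq_sum => i _; apply: card_Pi.
by rewrite sum_nat_const card_ord.
Qed.

Open Scope R_scope.

Theorem lemma14 (d n k : nat) (hd : (2 <= d)%N)
  (hn : Rle (Rmult (INR d) (Rpower 64 (Rmult (INR d) (Rdiv (ln (INR d)) (ln 2)))))
            (INR n))
  (hk0 : (0 < k)%N)
  (hk : Rle (INR k)
            (Rmult (Rpower (INR n) (Rdiv (Rminus (INR d) 1) (INR d)))
                   (Rpower (Rmult 5 (INR d)) (Rminus (Rdiv 1 (INR d)) 2)))) :
  let h := hval d k in
  let m := mval d n h in
  (1 <= m)%N /\ (#|Pset d h m| <= n)%N.
Proof.
  intros h m.
  destruct d as [|[|e]]; try discriminate hd.
  assert (hD : 2 <= INR e.+2) by (rewrite !S_INR; pose proof (pos_INR e); lra).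
  assert (hn0 : (0 < n)%N).
  { assert (0 < INR n).
    { eapply Rlt_le_trans; [|exact hn]. apply Rmult_lt_0_compat; [lra|apply Rpower_pos]. }
    apply/ltP. apply INR_lt. simpl. exact H. }
  assert (hK := key e n k h (hval_lt _ _) hn hk0 (F2 e n k hn0 hk)).
  assert (hQ : INR e.+2 * INR (h + 1) ^ e.+2 + INR e.+2 * INR (h + 1) ^ (e.+2 - 1)
               = INR e.+2 * (INR h + 1) ^ e.+1 * (INR h + 2)).
  { rewrite subn1 /=. rewrite (plus_INR h 1). simpl INR. ring. }
  assert (hH := pos_INR h).
  assert (hQp : 0 < INR e.+2 * (INR h + 1) ^ e.+1 * (INR h + 2)).
  { apply Rmult_lt_0_compat; [|lra]. apply Rmult_lt_0_compat; [lra|]. apply pow_lt; lra. }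
  assert (hm : m = Z.to_nat (Int_part (INR n / (INR e.+2 * (INR h + 1) ^ e.+1 * (INR h + 2))))).
  { unfold m, mval. rewrite hQ. reflexivity. }
  assert (hr : 1 <= INR n / (INR e.+2 * (INR h + 1) ^ e.+1 * (INR h + 2))).
  { apply (Rmult_le_reg_r (INR e.+2 * (INR h + 1) ^ e.+1 * (INR h + 2))); [exact hQp|].
    revert hQp hK. generalize (INR e.+2 * (INR h + 1) ^ e.+1 * (INR h + 2)). intros Q hQp hK.
    unfold Rdiv. rewrite Rmult_assoc (Rinv_l _ (Rgt_not_eq _ _ hQp)). lra. }
  assert (hm1 : (1 <= m)%N) by (rewrite hm; apply ip_ge1; exact hr).
  split; [exact hm1|].
  assert (hmle : INR m * (INR e.+2 * (INR h + 1) ^ e.+1 * (INR h + 2)) <= INR n).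
  { rewrite hm. revert hQp hr. generalize (INR e.+2 * (INR h + 1) ^ e.+1 * (INR h + 2)).
    intros Q hQp hr.
    assert (hle := ip_le _ (Rle_trans _ _ _ Rle_0_1 hr)).
    apply (Rmult_le_compat_r Q) in hle; [|lra].
    unfold Rdiv in hle. rewrite Rmult_assoc (Rinv_l _ (Rgt_not_eq _ _ hQp)) Rmult_1_r in hle.
    exact hle. }
  apply: leq_trans; first exact: card_Pset.
  apply: (@leq_trans (m * (e.+2 * ((h.+1) ^ e.+1 * h.+2)))).
  { have H1 : ((h * m).+1 <= m * h.+2)%N by move: hm1; clear; nia.
    rewrite (_ : (e.+2).-1 = e.+1) //.
    apply: leq_trans (leq_mul (leqnn _) (leq_mul (leqnn _) H1)) _.
    move: (h.+1 ^ e.+1)%N => X. clear. apply/eqP. lia. }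
  apply/leP. apply INR_le.
  change (INR (Nat.mul m (Nat.mul e.+2 (Nat.mul ((h.+1) ^ e.+1)%N h.+2)))) with
    (INR (m * (e.+2 * ((h.+1) ^ e.+1 * h.+2)))%N).
  rewrite !mult_INR INR_expn !S_INR.
  rewrite !S_INR in hmle.
  eapply Rle_trans; [|exact hmle]. right. ring.
Qed.
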